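(* Let $K\ge2$. For $\alpha\in\mathbb{R}$ let $s_\alpha(v)=(1-\alpha)v+\frac{\alpha}{K}$ (applied componentwise to vectors), let $q_{\mathrm{L}}:\mathbb{R}^K\to\Delta_{K-1}$ be the softmax map, let $q_{\mathrm{RL},\alpha}(g)=s_\alpha^{-1}(q_{\mathrm{L}}(g))$ for $\alpha\neq1$ (with $k$-th component $q_{\mathrm{RL},\alpha,k}(g)$), and let $D_{\mathrm{SKL},\alpha}(p\|q)=\sum_{k=1}^K s_\alpha(p_k)\ln\frac{s_\alpha(p_k)}{s_\alpha(q_k)}$ for $p,q\in s_\alpha^{-1}(\Delta_{K-1})$. Then: (B1) for $g\in\mathbb{R}^K$ and $k=1,\dots,K$, $q_{\mathrm{RL},\alpha,k}(g)$ can range over $[-\frac{\alpha}{K(1-\alpha)},\frac{K-\alpha}{K(1-\alpha)}]$ if $\alpha\in[0,1)$ and over $[\frac{K-\alpha}{K(1-\alpha)},-\frac{\alpha}{K(1-\alpha)}]$ if $\alpha\in(1,\frac{K}{K-1}]$, and each of these intervals contains $[0,1]$; (B2) $\sum_{k=1}^K q_{\mathrm{RL},\alpha,k}(g)=1$ for all $g\in\mathbb{R}^K$ and all $\alpha\neq1$; (B3) for $\alpha\in[0,1)\cup(1,\frac{K}{K-1}]$ and all $p,q\in s_\alpha^{-1}(\Delta_{K-1})$, $D_{\mathrm{SKL},\alpha}(p\|q)\ge0$, with equality if and only if $p=q$; moreover $D_{\mathrm{SKL},1}(p\|q)=0$ for all $p,q\in s_1^{-1}(\Delta_{K-1})$;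 (B4) for every $\alpha\in[0,\frac{K}{K-1}]$, $D_{\mathrm{SKL},\alpha}(p\|q)$ is jointly convex in $(p,q)$: $D_{\mathrm{SKL},\alpha}(rp_1+(1-r)p_2\|rq_1+(1-r)q_2)\le rD_{\mathrm{SKL},\alpha}(p_1\|q_1)+(1-r)D_{\mathrm{SKL},\alpha}(p_2\|q_2)$ for all $p_1,p_2,q_1,q_2\in s_\alpha^{-1}(\Delta_{K-1})$ and $r\in[0,1]$; (B5) for $\alpha\in[0,1)\cup(1,\frac{K}{K-1}]$, $\operatorname{argmin}_{g\in\mathbb{R}^K,\,g_K=0}D_{\mathrm{SKL},\alpha}((1,0,\dots,0)^\top\|q_{\mathrm{L}}(g))=(\infty,0,\dots,0)^\top$; (B6) $\operatorname{argmin}_{g\in\mathbb{R}^K,\,g_K=0}D_{\mathrm{SKL},\alpha}((1,0,\dots,0)^\top\|q_{\mathrm{RL},\alpha}(g))$ equals $(\infty,0,\dots,0)^\top$ if $\alpha=0$, equals $(\ln(\frac{K}{\alpha}+1-K),0,\dots,0)^\top$ for any $\alpha\in(0,1)\cup(1,\frac{K}{K-1})$, and equals $(-\infty,0,\dots,0)^\top$ if $\alpha=\frac{K}{K-1}$; (B7) for any $\alpha\in(1,\frac{K}{K-1}]$, $p,q\in s_\alpha^{-1}(\Delta_{K-1})$ and $g\in\mathbb{R}^K$: $D_{\mathrm{SKL},\alpha}(p\|q)=D_{\mathrm{SKL},K-(K-1)\alpha}(\frac{\mathbf{1}-p}{K-1}\|\frac{\mathbf{1}-q}{K-1})$, $D_{\mathrm{SKL},\alpha}(p\|q_{\mathrm{RL},\alpha}(g))=D_{\mathrm{SKL},K-(K-1)\alpha}(\frac{\mathbf{1}-p}{K-1}\|q_{\mathrm{RL},K-(K-1)\alpha}(g))$,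 $K-(K-1)\alpha\in[0,1)$, and $\frac{\mathbf{1}-p}{K-1}\in s_{K-(K-1)\alpha}^{-1}(\Delta_{K-1})$; (B8) if $K=2$, then for any $\alpha\in(1,2]$, $p\in s_\alpha^{-1}(\Delta_1)$ and $g\in\mathbb{R}^2$: $D_{\mathrm{SKL},\alpha}(p\|q_{\mathrm{L}}(g))=D_{\mathrm{SKL},2-\alpha}(\mathbf{1}-p\|q_{\mathrm{L}}(-g))=D_{\mathrm{SKL},2-\alpha}(p\|q_{\mathrm{L}}(g))$, $D_{\mathrm{SKL},\alpha}(p\|q_{\mathrm{RL},\alpha}(g))=D_{\mathrm{SKL},2-\alpha}(\mathbf{1}-p\|q_{\mathrm{RL},2-\alpha}(g))=D_{\mathrm{SKL},2-\alpha}(p\|q_{\mathrm{RL},2-\alpha}(-g))$, $2-\alpha\in[0,1)$, and $\mathbf{1}-p\in s_{2-\alpha}^{-1}(\Delta_1)$.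
   Context: $\Delta_{K-1}=\{p\in\mathbb{R}^K: p_k\ge0,\ \sum_k p_k=1\}$ is the probability simplex and $\mathbf{1}=(1,\dots,1)^\top\in\mathbb{R}^K$. The smoothing map is $s_\alpha(v)=(1-\alpha)v+\frac{\alpha}{K}$ for scalars, applied componentwise to vectors $v\in\mathbb{R}^K$; for $\alpha\ne1$ its inverse is $s_\alpha^{-1}(u)=(u-\frac{\alpha}{K})/(1-\alpha)$ componentwise. The set $s_\alpha^{-1}(\Delta_{K-1})$ is $\{v\in\mathbb{R}^K: s_\alpha(v)\in\Delta_{K-1}\}$ (for $\alpha\neq1$ this is the image of $\Delta_{K-1}$ under $s_\alpha^{-1}$; for $\alpha=1$ it is all of $\mathbb{R}^K$). The softmax (logit model) is $q_{\mathrm{L}}(g)=\big(e^{g_1}/\sum_l e^{g_l},\dots,e^{g_K}/\sum_l e^{g_l}\big)^\top$ and the roughened logit model is $q_{\mathrm{RL},\alpha}(g)=s_\alpha^{-1}(q_{\mathrm{L}}(g))$. The smoothed KL divergence is $D_{\mathrm{SKL},\alpha}(p\|q)=\sum_k s_\alpha(p_k)\ln\frac{s_\alpha(p_k)}{s_\alpha(q_k)}$ with the conventions $0\ln(0/c)=0$ and $c\ln(c/0)=+\infty$ for $c>0$; for $\alpha=0$ it is the KL divergence. In (B5)–(B6), minimizers are understood with coordinates in the extended real line, the maps $q_{\mathrm{L}},q_{\mathrm{RL},\alpha}$ being extended by continuity (e.g. $(\pm\infty,0,\dots,0)^\top$ denotes the limit $g_1\to\pm\infty$ with the remaining coordinates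 $0$). For $K=2$, $\mathbf{1}-p=(1-p_1,1-p_2)^\top$. *)

(* Defs.v *)
From HB Require Import structures.
From mathcomp Require Import all_boot all_order all_algebra.
From mathcomp Require Import all_classical all_reals all_analysis.
Set Implicit Arguments. Unset Strict Implicit. Unset Printing Implicit Defensive.
Import Order.TTheory GRing.Theory Num.Theory.
Import numFieldNormedType.Exports.
Local Open Scope classical_set_scope.
Local Open Scope ring_scope.

Section Defs.
Variables (R : realType) (K : nat).

Definition smooth (a v : R) : R := (1 - a) * v + a / K%:R.
Definition smooth_inv (a u : R) : R := (u - a / K%:R) / (1 - a).

Definition simplex (p : 'I_K -> R) : Prop :=
  (forall k, 0 <= p k) /\ \sum_(k < K) p k = 1.

Definition sinv_simplex (a : R) (v : 'I_K -> R) : Prop :=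
  simplex (fun k => smooth a (v k)).

Definition softmax (g : 'I_K -> R) : 'I_K -> R :=
  fun k => expR (g k) / \sum_(l < K) expR (g l).

Definition qRL (a : R) (g : 'I_K -> R) : 'I_K -> R :=
  fun k => smooth_inv a (softmax g k).

Definition xlogxy (x y : R) : \bar R :=
  if x == 0 then 0%E else if y == 0 then +oo%E else (x * ln (x / y))%:E.

Definition DSKL (a : R) (p q : 'I_K -> R) : \bar R :=
  (\sum_(k < K) xlogxy (smooth a (p k)) (smooth a (q k)))%E.

Definition e1 : 'I_K -> R := fun k => if val k == 0%N then 1 else 0.

Definition ray (t : R) : 'I_K -> R := fun k => if val k == 0%N then t else 0.

(* constraint g_K = 0 (last coordinate, index K-1) *)
Definition last0 (g : 'I_K -> R) : Prop := forall k : 'I_K, val k = K.-1 -> g k = 0.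

(* "argmin_{g in R^K, g_K = 0} f = (+oo,0,...,0)": the infimum of f over
   {g | g_K = 0} is not attained at any finite g, and is the limit of
   f (t,0,...,0) as t -> +oo. *)
Definition argmin_pinfty (f : ('I_K -> R) -> \bar R) : Prop :=
  exists L : \bar R,
    (fun t => f (ray t)) @ pinfty_nbhs R --> L /\
    (forall g, last0 g -> (L < f g)%E).

Definition argmin_ninfty (f : ('I_K -> R) -> \bar R) : Prop :=
  exists L : \bar R,
    (fun t => f (ray t)) @ ninfty_nbhs R --> L /\
    (forall g, last0 g -> (L < f g)%E).

Definition argmin_at (f : ('I_K -> R) -> \bar R) (g0 : 'I_K -> R) : Prop :=
  last0 g0 /\
  (forall g, last0 g -> (f g0 <= f g)%E /\ (f g = f g0 -> g = g0)).

End Defs.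

Arguments smooth {R} K a v.
Arguments smooth_inv {R} K a u.
Arguments simplex {R} K p.
Arguments sinv_simplex {R} K a v.
Arguments softmax {R} K g _.
Arguments qRL {R} K a g _.
Arguments DSKL {R} K a p q.
Arguments e1 R K _ : clear implicits.
Arguments ray {R} K t _.
Arguments last0 {R} K g.
Arguments argmin_pinfty {R} K f.
Arguments argmin_ninfty {R} K f.
Arguments argmin_at {R} K f g0.

(* Main.v *)
Require Import Defs.
From HB Require Import structures.
From mathcomp Require Import all_boot all_order all_algebra.
From mathcomp Require Import all_classical all_reals all_analysis.
From mathcomp Require Import ring lra zify.
Import Order.TTheory GRing.Theory Num.Theory.
Import numFieldNormedType.Exports.
Local Open Scope classical_set_scope.
Local Open Scope ring_scope.

Section H.
Variable R : realType.
Implicit Types x y t : R.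

Lemma ln_le_sub1 t : 0 < t -> ln t <= t - 1.
Proof.
move=> t0; have := expR_ge1Dx (ln t); rewrite lnK ?posrE // => h; lra.
Qed.

Lemma ln_lt_sub1 t : 0 < t -> t != 1 -> ln t < t - 1.
Proof.
move=> t0 t1; have : ln t != 0.
  by apply: contraNneq t1 => h; rewrite -(lnK t0) h expR0.
move=> /expR_gt1Dx; rewrite lnK ?posrE // => h; lra.
Qed.

Lemma xlogxy_fin x y : (x = 0 \/ y != 0) -> xlogxy x y = (x * ln (x / y))%:E.
Proof.
move=> h; rewrite /xlogxy; case: eqP => [->|x0]; first by rewrite mul0r.
by case: h => // /negPf ->.
Qed.

Lemma key_ineq x y : 0 < x -> 0 < y -> x - y <= x * ln (x / y).
Proof.
move=> x0 y0; have h := @ln_le_sub1 (y / x) (divr_gt0 y0 x0).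
have e : ln (x / y) = - ln (y / x).
  by rewrite -lnV ?posrE ?divr_gt0 // invf_div.
rewrite e; set L := ln (y / x) in h *; set z := y / x in h.
have xz : x * z = y by rewrite /z mulrC divfK // gt_eqF.
nra.
Qed.

Lemma key_ineq_lt x y : 0 < x -> 0 < y -> x != y -> x - y < x * ln (x / y).
Proof.
move=> x0 y0 xy.
have zn1 : y / x != 1.
  apply: contraNneq xy => h; have e : y = y / x * x by rewrite divfK // gt_eqF.
  by rewrite e h mul1r.
have h := @ln_lt_sub1 (y / x) (divr_gt0 y0 x0) zn1.
have e : ln (x / y) = - ln (y / x).
  by rewrite -lnV ?posrE ?divr_gt0 // invf_div.
rewrite e; set L := ln (y / x) in h *; set z := y / x in h zn1.
have xz : x * z = y by rewrite /z mulrC divfK // gt_eqF.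
nra.
Qed.

Lemma xlogxy_ge x y : 0 <= x -> 0 <= y -> ((x - y)%:E <= xlogxy x y)%E.
Proof.
move=> x0 y0; rewrite /xlogxy; case: eqP => [->|/eqP xn0].
  by rewrite lee_fin; lra.
case: eqP => [_|/eqP yn0]; first exact: leey.
rewrite lee_fin; apply: key_ineq; rewrite lt_neqAle eq_sym; apply/andP; split => //.
Qed.

Lemma xlogxy_gt x y : 0 <= x -> 0 <= y -> x != y -> ((x - y)%:E < xlogxy x y)%E.
Proof.
move=> x0 y0 xy; rewrite /xlogxy; case: eqP => [x00|/eqP xn0].
  rewrite lte_fin; subst x; have : 0 < y by rewrite lt_neqAle y0 andbT.
  lra.
case: eqP => [_|/eqP yn0]; first exact: ltey.
rewrite lte_fin; apply: key_ineq_lt => //; rewrite lt_neqAle eq_sym; apply/andP; split => //.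
Qed.

Variable K : nat.

Lemma gibbs (x y : 'I_K -> R) :
  (forall k, 0 <= x k) -> (forall k, 0 <= y k) -> \sum_k x k = \sum_k y k ->
  (0 <= \sum_k xlogxy (x k) (y k))%E /\
  (\sum_k xlogxy (x k) (y k) = 0%E -> x = y).
Proof.
move=> x0 y0 sxy.
have s0 : \sum_k (x k - y k) = 0 by rewrite sumrB sxy subrr.
split.
  apply: (@le_trans _ _ ((\sum_k (x k - y k))%:E)); first by rewrite s0.
  rewrite -sumEFin; apply: lee_sum => k _; exact: xlogxy_ge.
move=> h; apply/funext => k0; apply/eqP/negPn/negP => hk.
have : ((\sum_k (x k - y k))%:E < \sum_k xlogxy (x k) (y k))%E.
  rewrite (bigD1 k0) //= [X in (_ < X)%E](bigD1 k0) //= EFinD.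
  apply: lte_leD => //; first exact: xlogxy_gt.
  rewrite -sumEFin; apply: lee_sum => k _; exact: xlogxy_ge.
by rewrite s0 h ltxx.
Qed.

End H.

Section H2.
Variable R : realType.
Implicit Types x y : R.

Lemma xlogxy_Ny x y : xlogxy x y != -oo%E.
Proof. by rewrite /xlogxy; case: ifP => //; case: ifP. Qed.

Lemma mulE_Ny (c : R) (u : \bar R) : 0 <= c -> u != -oo%E -> (c%:E * u)%E != -oo%E.
Proof.
move=> c0; case: u => [r _|_|//]; first by [].
have [->|cn0] := eqVneq c 0; first by rewrite mul0e.
by rewrite mulry gtr0_sg ?mul1e // lt_neqAle eq_sym cn0.
Qed.

Lemma sumNy (I : Type) (s : seq I) (F : I -> \bar R) :
  (forall i, F i != -oo%E) -> (\sum_(i <- s) F i)%E != -oo%E.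
Proof.
move=> hF; elim: s => [|i s IH]; first by rewrite big_nil.
by rewrite big_cons adde_eq_ninfty negb_or hF IH.
Qed.

Lemma sume_distr (I : Type) (s : seq I) (c : R) (F : I -> \bar R) :
  0 <= c -> (forall i, F i != -oo%E) ->
  (c%:E * \sum_(i <- s) F i = \sum_(i <- s) c%:E * F i)%E.
Proof.
move=> c0 hF; elim: s => [|i s IH]; first by rewrite !big_nil mule0.
rewrite !big_cons muleDr // ?IH //.
by apply: ltninfty_adde_def; rewrite inE ltNye ?hF ?sumNy.
Qed.

Lemma aux_ls (a b A B : R) : 0 <= a -> 0 <= b -> (0 < a -> 0 < b) -> 0 < A -> 0 < B ->
  a * ln (A / B) + a - b * A / B <= a * ln (a / b).
Proof.
move=> a0 b0 ab A0 B0; have [->|an0] := eqVneq a 0.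
  rewrite !mul0r add0r subr_le0 -mulrA; apply: mulr_ge0 => //; apply: divr_ge0; lra.
have ap : 0 < a by rewrite lt_neqAle eq_sym an0.
have bp := ab ap.
set t := (A / B) / (a / b).
have tp : 0 < t by rewrite /t !divr_gt0.
have e : ln (a / b) = ln (A / B) - ln t.
  rewrite /t; have := @ln_div R (A / B) (a / b).
  rewrite !posrE !divr_gt0 // => /(_ isT isT) ->; lra.
have h := @ln_le_sub1 R t tp.
have at1 : a * t = b * A / B by rewrite /t; field; rewrite !gt_eqF.
rewrite e -at1; nra.
Qed.

Lemma logsum (x1 y1 x2 y2 : R) : 0 <= x1 -> 0 <= y1 -> 0 <= x2 -> 0 <= y2 ->
  (0 < x1 -> 0 < y1) -> (0 < x2 -> 0 < y2) -> 0 < x1 + x2 -> 0 < y1 + y2 ->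
  (x1 + x2) * ln ((x1 + x2) / (y1 + y2)) <= x1 * ln (x1 / y1) + x2 * ln (x2 / y2).
Proof.
move=> *; set X := x1 + x2; set Y := y1 + y2.
have h1 := @aux_ls x1 y1 X Y.
have h2 := @aux_ls x2 y2 X Y.
have e : X - (y1 + y2) * X / Y = 0 by rewrite -/Y; field; rewrite gt_eqF.
have : x1 * ln (X / Y) + x1 - y1 * X / Y + (x2 * ln (X / Y) + x2 - y2 * X / Y)
   = X * ln (X / Y) by rewrite -[RHS]addr0 -e /X; ring.
move=> e2; rewrite -e2; apply: lerD; [apply: h1|apply: h2] => //.
Qed.

Lemma mulEy (c : R) : 0 < c -> (c%:E * +oo = +oo)%E.
Proof. by move=> c0; rewrite mulry gtr0_sg // mul1e. Qed.

Lemma xlogxy_convex x1 x2 y1 y2 (r : R) :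
  0 <= x1 -> 0 <= x2 -> 0 <= y1 -> 0 <= y2 -> 0 <= r <= 1 ->
  (xlogxy (r * x1 + (1 - r) * x2) (r * y1 + (1 - r) * y2)
    <= r%:E * xlogxy x1 y1 + (1 - r)%:E * xlogxy x2 y2)%E.
Proof.
move=> hx1 hx2 hy1 hy2 /andP[r0 r1].
have [->|rn0] := eqVneq r 0.
  by rewrite !mul0r !add0r subr0 !mul1r mul0e add0e mul1e.
have [->|rn1] := eqVneq r 1.
  by rewrite subrr !mul0r !addr0 !mul1r mul0e adde0 mul1e.
have rp : 0 < r by rewrite lt_neqAle eq_sym rn0.
have rq : 0 < 1 - r by rewrite subr_gt0 lt_neqAle rn1.
have nx : forall x y, 0 <= y -> (x = 0 \/ y != 0) -> 0 < x -> 0 < y.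
  move=> x y y0 [->|yn0] xp; first by rewrite ltxx in xp.
  by rewrite lt_neqAle eq_sym yn0.
have [c1|c1] := boolP ((x1 != 0) && (y1 == 0)).
  case/andP: c1 => x1n y1z.
  have -> : xlogxy x1 y1 = +oo%E by rewrite /xlogxy (negPf x1n) y1z.
  by rewrite mulEy // addye ?leey // mulE_Ny ?xlogxy_Ny // ltW.
have [c2|c2] := boolP ((x2 != 0) && (y2 == 0)).
  case/andP: c2 => x2n y2z.
  have -> : xlogxy x2 y2 = +oo%E by rewrite /xlogxy (negPf x2n) y2z.
  by rewrite (@mulEy (1 - r) rq) addey ?leey // mulE_Ny ?xlogxy_Ny.
have h1 : x1 = 0 \/ y1 != 0.
  by move: c1; rewrite negb_and negbK => /orP[/eqP|]; [left|right].
have h2 : x2 = 0 \/ y2 != 0.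
  by move: c2; rewrite negb_and negbK => /orP[/eqP|]; [left|right].
rewrite (@xlogxy_fin R _ _ h1) (@xlogxy_fin R _ _ h2) -!EFinM -EFinD.
have rx1 := mulr_ge0 r0 hx1; have rx2 := mulr_ge0 (ltW rq) hx2.
have ry1 := mulr_ge0 r0 hy1; have ry2 := mulr_ge0 (ltW rq) hy2.
have [X0|Xn0] := eqVneq (r * x1 + (1 - r) * x2) 0.
  have : r * x1 = 0 by lra.
  move/eqP; rewrite mulf_eq0 (negPf rn0) /= => /eqP x10.
  have : (1 - r) * x2 = 0 by lra.
  move/eqP; rewrite mulf_eq0 (gt_eqF rq) /= => /eqP x20.
  by rewrite X0 /xlogxy eqxx x10 x20 !mul0r !mulr0 !add0r lee_fin.
have Xp : 0 < r * x1 + (1 - r) * x2 by rewrite lt_neqAle eq_sym Xn0 addr_ge0.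
have p1 : 0 < r * x1 -> 0 < r * y1.
  move=> h; apply: mulr_gt0 => //; apply: nx hy1 h1 _.
  by move: h; rewrite pmulr_rgt0.
have p2 : 0 < (1 - r) * x2 -> 0 < (1 - r) * y2.
  move=> h; apply: mulr_gt0 => //; apply: nx hy2 h2 _.
  by move: h; rewrite pmulr_rgt0.
have Yp : 0 < r * y1 + (1 - r) * y2.
  have [h|h] := boolP (0 < r * x1).
    by have := p1 h; lra.
  have : 0 < (1 - r) * x2 by lra.
  by move/p2; lra.
rewrite (@xlogxy_fin R); last by right; rewrite gt_eqF.
rewrite lee_fin.
have ee : forall c u v : R, 0 < c -> c * (u * ln (u / v)) = (c * u) * ln ((c * u) / (c * v)).
  move=> c u v cp; rewrite invfM mulrACA divff ?gt_eqF // mul1r; ring.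
rewrite (ee r) // (ee (1 - r)) //.
by apply: logsum.
Qed.

End H2.

Section H3.
Variable R : realType.
Variable K : nat.
Hypothesis hK : (2 <= K)%N.

Lemma Kgt1 : 1 < K%:R :> R.
Proof. by rewrite ltr1n. Qed.
Lemma Kge2 : 2 <= K%:R :> R.
Proof. by rewrite ler_nat. Qed.
Lemma Kgt0 : 0 < K%:R :> R.
Proof. by rewrite ltr0n; apply: leq_trans hK. Qed.
Lemma Kn0 : K%:R != 0 :> R.
Proof. by apply/negbT/gt_eqF/Kgt0. Qed.
Lemma Km1n0 : K%:R - 1 != 0 :> R.
Proof. by have := Kgt1; rewrite subr_eq0; apply: contraTneq => ->; rewrite ltxx. Qed.

Lemma smoothK (a u : R) : a != 1 -> smooth K a (smooth_inv K a u) = u.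
Proof.
move=> a1; rewrite /smooth /smooth_inv; have : 1 - a != 0 by rewrite subr_eq0 eq_sym.
by move=> h; have h2 := Kn0; field; rewrite h h2.
Qed.

Lemma smooth_inj (a : R) u v : a != 1 -> smooth K a u = smooth K a v -> u = v.
Proof.
move=> a1; rewrite /smooth => /addIr /mulfI; apply; by rewrite subr_eq0 eq_sym.
Qed.

Lemma sum_const_ord (c : R) : \sum_(k < K) c = c * K%:R.
Proof. by rewrite sumr_const card_ord mulr_natr. Qed.

Lemma sum_smooth (a : R) (v : 'I_K -> R) :
  \sum_k smooth K a (v k) = (1 - a) * \sum_k v k + a.
Proof.
rewrite /smooth big_split /= -mulr_sumr sum_const_ord; congr (_ + _).
by rewrite divfK // Kn0.
Qed.

Lemma sumexp_gt0 (g : 'I_K -> R) : 0 < \sum_l expR (g l).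
Proof.
have k0 : 'I_K by exists 0%N; apply: leq_trans hK.
rewrite (bigD1 k0) //=; apply: ltr_pwDl; first exact: expR_gt0.
by apply: sumr_ge0 => i _; exact: expR_ge0.
Qed.

Lemma softmax_gt0 (g : 'I_K -> R) k : 0 < softmax K g k.
Proof. by rewrite /softmax divr_gt0 ?expR_gt0 ?sumexp_gt0. Qed.

Lemma softmax_sum (g : 'I_K -> R) : \sum_k softmax K g k = 1.
Proof.
rewrite /softmax -mulr_suml divff //; apply/negbT/gt_eqF/sumexp_gt0.
Qed.

Lemma softmax_lt1 (g : 'I_K -> R) k : softmax K g k < 1.
Proof.
have [j jk] : exists j : 'I_K, j != k.
  have [k0|k0] := eqVneq (val k) 0%N.
    have j1 : (1 < K)%N by [].
    by exists (Ordinal j1); apply/eqP => h; move: k0; rewrite -h.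
  have j1 : (0 < K)%N by apply: leq_trans hK.
  by exists (Ordinal j1); apply: contraNneq k0 => <-.
rewrite -(softmax_sum g) (bigD1 k) //= ltrDl (bigD1 j) //=.
apply: ltr_pwDl; first exact: softmax_gt0.
by apply: sumr_ge0 => i _; exact: ltW (softmax_gt0 _ _).
Qed.

Lemma qRL_smooth (a : R) (g : 'I_K -> R) k : a != 1 -> smooth K a (qRL K a g k) = softmax K g k.
Proof. by move=> a1; rewrite /qRL smoothK. Qed.

Lemma xlogxy_xx (x : R) : xlogxy x x = 0%E.
Proof.
rewrite /xlogxy; case: eqP => // /eqP x0; rewrite ?(negPf x0) divff // ln1 mulr0 //.
Qed.

Lemma softmax_surj (k : 'I_K) (t : R) : 0 < t < 1 -> exists g, softmax K g k = t.
Proof.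
move=> /andP[t0 t1].
set c := t * (K%:R - 1) / (1 - t).
have cp : 0 < c.
  by apply: divr_gt0; [apply: mulr_gt0 => //; rewrite subr_gt0 Kgt1|rewrite subr_gt0].
exists (fun j => if j == k then ln c else 0).
rewrite /softmax eqxx lnK ?posrE //.
rewrite (bigD1 k) //= eqxx lnK ?posrE //.
have -> : \sum_(i < K | i != k) expR (if i == k then ln c else 0) = K%:R - 1.
  rewrite (eq_bigr (fun _ => 1)); last by move=> i /negPf ->; rewrite expR0.
  rewrite sumr_const cardC1 card_ord.
  have : (0 < K)%N by apply: leq_trans hK.
  by case: (K) => // n _ /=; rewrite -natr1 addrK.
have h1 : 1 - t != 0 by rewrite subr_eq0 eq_sym lt_eqF.
have h2 := Km1n0.
have den : c + (K%:R - 1) = (K%:R - 1) / (1 - t) by rewrite /c; field.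
by rewrite den /c; field; rewrite h1 h2.
Qed.

Lemma smooth_invK0 (a v : R) : a != 1 -> smooth_inv K a (smooth K a v) = v.
Proof.
move=> a1; rewrite /smooth /smooth_inv; have h : 1 - a != 0 by rewrite subr_eq0 eq_sym.
by have h2 := Kn0; field; rewrite h.
Qed.

Lemma sinv_le_lt1 (a u v : R) : a < 1 -> (smooth_inv K a u <= smooth_inv K a v) = (u <= v).
Proof. by move=> a1; rewrite /smooth_inv ler_pM2r ?invr_gt0 ?subr_gt0 // lerD2r. Qed.
Lemma sinv_lt_lt1 (a u v : R) : a < 1 -> (smooth_inv K a u < smooth_inv K a v) = (u < v).
Proof. by move=> a1; rewrite /smooth_inv ltr_pM2r ?invr_gt0 ?subr_gt0 // ltrD2r. Qed.
Lemma sinv_le_gt1 (a u v : R) : 1 < a -> (smooth_inv K a u <= smooth_inv K a v) = (v <= u).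
Proof. by move=> a1; rewrite /smooth_inv ler_nM2r ?invr_lt0 ?subr_lt0 // lerD2r. Qed.
Lemma sinv_lt_gt1 (a u v : R) : 1 < a -> (smooth_inv K a u < smooth_inv K a v) = (v < u).
Proof. by move=> a1; rewrite /smooth_inv ltr_nM2r ?invr_lt0 ?subr_lt0 // ltrD2r. Qed.

Lemma lo_eq (a : R) : a != 1 -> - a / (K%:R * (1 - a)) = smooth_inv K a 0.
Proof.
move=> a1; have h : 1 - a != 0 by rewrite subr_eq0 eq_sym.
by rewrite /smooth_inv; have h2 := Kn0; field; rewrite h h2.
Qed.
Lemma hi_eq (a : R) : a != 1 -> (K%:R - a) / (K%:R * (1 - a)) = smooth_inv K a 1.
Proof.
move=> a1; have h : 1 - a != 0 by rewrite subr_eq0 eq_sym.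
by rewrite /smooth_inv; have h2 := Kn0; field; rewrite h h2.
Qed.
Lemma zero_eq (a : R) : a != 1 -> 0 = smooth_inv K a (a / K%:R).
Proof. by move=> a1; rewrite /smooth_inv subrr mul0r. Qed.

Lemma qRL_eq (a : R) g k : qRL K a g k = smooth_inv K a (softmax K g k).
Proof. by []. Qed.

Lemma B1 (a : R) :
     let lo := - a / (K%:R * (1 - a)) in
     let hi := (K%:R - a) / (K%:R * (1 - a)) in
     (0 <= a < 1 ->
        (forall (g : 'I_K -> R) (k : 'I_K), lo <= qRL K a g k <= hi) /\
        (forall (k : 'I_K) (y : R), lo < y < hi -> exists g, qRL K a g k = y) /\
        lo <= 0 /\ 1 <= hi) /\
     (1 < a <= K%:R / (K%:R - 1) ->
        (forall (g : 'I_K -> R) (k : 'I_K), hi <= qRL K a g k <= lo) /\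
        (forall (k : 'I_K) (y : R), hi < y < lo -> exists g, qRL K a g k = y) /\
        hi <= 0 /\ 1 <= lo).
Proof.
move=> lo hi.
have Kg0 := Kgt0; have Kg1 := Kgt1; have Kg2 := Kge2.
split.
  move=> /andP[a0 a1]; have an1 : a != 1 by rewrite lt_eqF.
  rewrite /lo /hi lo_eq // hi_eq //.
  split.
    move=> g k; rewrite qRL_eq !sinv_le_lt1 //.
    by rewrite (ltW (softmax_gt0 _ _)) (ltW (softmax_lt1 _ _)).
  split.
    move=> k y /andP[h1 h2].
    have ht1 : 0 < smooth K a y by rewrite -(sinv_lt_lt1 a 0 (smooth K a y) a1) smooth_invK0.
    have ht2 : smooth K a y < 1 by rewrite -(sinv_lt_lt1 a (smooth K a y) 1 a1) smooth_invK0.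
    have [g hg] : exists g, softmax K g k = smooth K a y by apply: softmax_surj; rewrite ht1 ht2.
    by exists g; rewrite qRL_eq hg smooth_invK0.
  have e1 : 1 = smooth_inv K a (smooth K a 1) by rewrite smooth_invK0.
  split; first by rewrite [X in _ <= X](zero_eq a an1) sinv_le_lt1 // divr_ge0 // ltW.
  rewrite [X in X <= _]e1 sinv_le_lt1 // /smooth mulr1.
  have w := divfK Kn0 a; set w' := a / K%:R in w *.
  nra.
move=> /andP[a1 aK]; have an1 : a != 1 by rewrite gt_eqF.
have Km : 0 < K%:R - 1 :> R by rewrite subr_gt0.
have aK' : a * (K%:R - 1) <= K%:R by rewrite -ler_pdivlMr.
rewrite /lo /hi lo_eq // hi_eq //.
split.
  move=> g k; rewrite qRL_eq !sinv_le_gt1 //.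
  by rewrite (ltW (softmax_gt0 _ _)) (ltW (softmax_lt1 _ _)).
split.
  move=> k y /andP[h1 h2].
  have ht1 : 0 < smooth K a y by rewrite -(sinv_lt_gt1 a (smooth K a y) 0 a1) smooth_invK0.
  have ht2 : smooth K a y < 1 by rewrite -(sinv_lt_gt1 a 1 (smooth K a y) a1) smooth_invK0.
  have [g hg] : exists g, softmax K g k = smooth K a y by apply: softmax_surj; rewrite ht1 ht2.
  by exists g; rewrite qRL_eq hg smooth_invK0.
have e1 : 1 = smooth_inv K a (smooth K a 1) by rewrite smooth_invK0.
split; first by rewrite [X in _ <= X](zero_eq a an1) sinv_le_gt1 // ler_pdivrMr // mul1r; nra.
rewrite [X in X <= _]e1 sinv_le_gt1 // /smooth mulr1.
have w := divfK Kn0 a; set w' := a / K%:R in w *.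
nra.
Qed.


Lemma B2 (a : R) (g : 'I_K -> R) : a != 1 -> \sum_(k < K) qRL K a g k = 1.
Proof.
move=> a1; have := sum_smooth a (qRL K a g).
rewrite (eq_bigr _ (fun k _ => qRL_smooth a g k a1)) softmax_sum => h.
have h' : (1 - a) * \sum_k qRL K a g k = (1 - a) * 1 by rewrite mulr1 {2}h addrK.
by apply: (mulfI _ h'); rewrite subr_eq0 eq_sym.
Qed.

Lemma sinv_sum (a : R) p : a != 1 -> sinv_simplex K a p -> \sum_k p k = 1.
Proof.
move=> a1 [_ ps]; move: ps; rewrite sum_smooth => h.
have h' : (1 - a) * \sum_k p k = (1 - a) * 1 by apply: (addIr a); rewrite h mulr1 subrK.
by apply: (mulfI _ h'); rewrite subr_eq0 eq_sym.
Qed.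

Lemma B3a (a : R) p q : a != 1 -> sinv_simplex K a p -> sinv_simplex K a q ->
  (0 <= DSKL K a p q)%E /\ (DSKL K a p q = 0%E <-> p = q).
Proof.
move=> a1 [p0 ps] [q0 qs].
have [h1 h2] := @gibbs R K _ _ p0 q0 (etrans ps (esym qs)).
split => //; split.
  move/h2 => e; apply/funext => k; apply: (smooth_inj a _ _ a1).
  exact: (congr1 (fun f => f k) e).
by move=> ->; rewrite /DSKL big1 // => k _; exact: xlogxy_xx.
Qed.

Lemma B3b (p q : 'I_K -> R) : DSKL K 1 p q = 0%E.
Proof.
by rewrite /DSKL big1 // => k _; rewrite /smooth subrr !mul0r !add0r xlogxy_xx.
Qed.

Lemma B4 (a r : R) (p1 p2 q1 q2 : 'I_K -> R) :
     0 <= a <= K%:R / (K%:R - 1) -> 0 <= r <= 1 ->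
     sinv_simplex K a p1 -> sinv_simplex K a p2 ->
     sinv_simplex K a q1 -> sinv_simplex K a q2 ->
     (DSKL K a (fun k => (r * p1 k + (1 - r) * p2 k)%R)
               (fun k => (r * q1 k + (1 - r) * q2 k)%R)
      <= r%:E * DSKL K a p1 q1 + (1 - r)%R%:E * DSKL K a p2 q2)%E.
Proof.
move=> _ /andP[r0 r1] [p10 _] [p20 _] [q10 _] [q20 _].
rewrite /DSKL (@sume_distr R _ _ r) //; last by move=> k; exact: xlogxy_Ny.
rewrite (@sume_distr R _ _ (1 - r)) //; last by move=> k; exact: xlogxy_Ny.
2: by rewrite subr_ge0.
rewrite -big_split /=; apply: lee_sum => k _.
have e : forall (u v : 'I_K -> R), smooth K a (r * u k + (1 - r) * v k)
   = r * smooth K a (u k) + (1 - r) * smooth K a (v k).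
  by move=> u v; rewrite /smooth; ring.
by rewrite !e; apply: xlogxy_convex; rewrite ?r0 ?r1.
Qed.

Lemma idB (a v : R) : smooth K (K%:R - (K%:R - 1) * a) ((1 - v) / (K%:R - 1)) = smooth K a v.
Proof. by rewrite /smooth; have h1 := Kn0; have h2 := Km1n0; field; rewrite h1 h2. Qed.

Lemma B7 (a : R) (p q g : 'I_K -> R) :
     1 < a <= K%:R / (K%:R - 1) ->
     sinv_simplex K a p -> sinv_simplex K a q ->
     let b := K%:R - (K%:R - 1) * a in
     let p' := fun k => (1 - p k) / (K%:R - 1) in
     let q' := fun k => (1 - q k) / (K%:R - 1) in
     DSKL K a p q = DSKL K b p' q' /\
     DSKL K a p (qRL K a g) = DSKL K b p' (qRL K b g) /\
     0 <= b < 1 /\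
     sinv_simplex K b p'.
Proof.
move=> /andP[a1 aK] hp hq b p' q'.
have Kg1 := Kgt1; have Km : 0 < K%:R - 1 :> R by rewrite subr_gt0.
have aK' : a * (K%:R - 1) <= K%:R by rewrite -ler_pdivlMr.
have b01 : 0 <= b < 1 by apply/andP; split; rewrite /b; nra.
have an1 : a != 1 by rewrite gt_eqF.
have bn1 : b != 1 by case/andP: b01 => _ /lt_eqF ->.
split; first by rewrite /DSKL; apply: eq_bigr => k _; rewrite /p' /q' /b !idB.
split.
  rewrite /DSKL; apply: eq_bigr => k _; rewrite /p' /b idB !qRL_smooth //.
split => //.
rewrite /sinv_simplex.
have -> : (fun k => smooth K b (p' k)) = (fun k => smooth K a (p k)).
  by apply/funext => k; rewrite /p' /b idB.
exact: hp.
Qed.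

Lemma kl_lim (F : set_system R) {FF : Filter F} (x : 'I_K -> R) (y : 'I_K -> R -> R) :
  (forall k, 0 <= x k) -> (forall k, y k t @[t --> F] --> x k) ->
  (\sum_k xlogxy (x k) (y k t))%E @[t --> F] --> 0%:E.
Proof.
move=> x0 yc.
have fin : \forall t \near F, forall k, (x k = 0 \/ y k t != 0).
  apply: filter_forall => k.
  have [->|xn0] := eqVneq (x k) 0; first by apply: (filterE FF) => t; left.
  have xp : 0 < x k by rewrite lt_neqAle eq_sym xn0 x0.
  by apply: filterS (cvgr_gt (x k) (yc k) 0 xp) => t h; right; rewrite gt_eqF.
pose G t := \sum_k x k * ln (x k / y k t).
have eqG : {near F, (fun t => (G t)%:E) =1 (fun t => (\sum_k xlogxy (x k) (y k t))%E)}.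
  apply: filterS fin => t h; rewrite /G -sumEFin; apply: eq_bigr => k _.
  by rewrite (@xlogxy_fin R _ _ (h k)).
apply: cvg_trans (near_eq_cvg eqG) _.
apply: cvg_EFin; first by apply: (filterE FF).
have -> : (0 : R) = \sum_(k < K) x k * ln (x k / x k).
  rewrite big1 // => k _; have [->|xn0] := eqVneq (x k) 0; first by rewrite mul0r.
  by rewrite divff // ln1 mulr0.
apply: (@cvg_big _ _ +%R 0 xpredT add_continuous) => k _.
have [xk0|xn0] := eqVneq (x k) 0.
  rewrite xk0 mul0r.
  have -> : (fun t => 0 * ln (0 / y k t)) = (fun _ => 0 : R) by apply/funext => t; rewrite mul0r.
  exact: cvg_cst.
apply: cvgMl_tmp.
apply: (continuous_cvg _ (continuous_ln _)); first by rewrite divff.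
apply: cvgMl_tmp; apply: cvgV => //; exact: yc.
Qed.

Lemma lim_aux (F : set_system R) {FF : Filter F} (u : R -> R) (c : R) :
  u t @[t --> F] --> 0 ->
  [/\ (1 + c * u t)^-1 @[t --> F] --> (1 : R),
      u t * (1 + c * u t)^-1 @[t --> F] --> (0 : R),
      (0 < c -> (u t + c)^-1 @[t --> F] --> c^-1) &
      (0 < c -> u t * (u t + c)^-1 @[t --> F] --> 0)].
Proof.
move=> hu.
have h1 : (1 + c * u t) @[t --> F] --> (1 : R).
  have := cvgD (@cvg_cst R 1 _ F FF) (cvgMl_tmp (a:=c) hu); rewrite mulr0 addr0; exact.
have h1' : (1 + c * u t)^-1 @[t --> F] --> (1 : R).
  by have := cvgV (oner_neq0 R) h1; rewrite invr1; exact.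
have h3 : 0 < c -> (u t + c)^-1 @[t --> F] --> c^-1.
  move=> cp; apply: cvgV; first by rewrite gt_eqF.
  have := cvgD hu (@cvg_cst R c _ F FF); rewrite add0r; exact.
split => //.
- by have := cvgM hu h1'; rewrite mul0r; exact.
- by move=> cp; have := cvgM hu (h3 cp); rewrite mul0r; exact.
Qed.

Definition k0 : 'I_K := Ordinal (ltn_trans (ltnSn 0) hK).
Definition k1 : 'I_K := Ordinal hK.

Lemma k10 : k1 != k0.
Proof. by rewrite -(inj_eq val_inj). Qed.

Lemma sum_neq_one (k : 'I_K) : \sum_(l < K | l != k) (1 : R) = K%:R - 1.
Proof.
rewrite sumr_const cardC1 card_ord.
have : (0 < K)%N by apply: leq_trans hK.
by case: (K) => // n _ /=; rewrite -natr1 addrK.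
Qed.

Lemma rayE (t : R) l : ray K t l = if l == k0 then t else 0.
Proof. by rewrite /ray -(inj_eq val_inj). Qed.

Lemma sum_ray (t : R) : \sum_l expR (ray K t l) = expR t + (K%:R - 1).
Proof.
rewrite (bigD1 k0) //= rayE eqxx; congr (_ + _).
rewrite -(sum_neq_one k0); apply: eq_bigr => l lk.
by rewrite rayE (negPf lk) expR0.
Qed.

Lemma softmax_ray0 (t : R) : softmax K (ray K t) k0 = expR t / (expR t + (K%:R - 1)).
Proof. by rewrite /softmax sum_ray rayE eqxx. Qed.

Lemma softmax_rayn (t : R) k : k != k0 -> softmax K (ray K t) k = (expR t + (K%:R - 1))^-1.
Proof. by move=> kk; rewrite /softmax sum_ray rayE (negPf kk) expR0 mul1r. Qed.

Lemma e1E k : e1 R K k = if k == k0 then 1 else 0.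
Proof. by rewrite /e1 -(inj_eq val_inj). Qed.

Lemma lim_pinfty k : softmax K (ray K t) k @[t --> +oo] --> e1 R K k.
Proof.
have Kg1 := Kgt1; have cp : 0 < K%:R - 1 :> R by rewrite subr_gt0.
have [l1 l2 l3 l4] := @lim_aux (pinfty_nbhs R) _ (fun t => expR (- t)) (K%:R - 1) (@cvgr_expR R).
rewrite e1E; case: eqP => [->|/eqP kk].
  have -> : (fun t : R => softmax K (ray K t) k0) = (fun t => (1 + (K%:R - 1) * expR (- t))^-1).
    apply/funext => t; rewrite softmax_ray0 expRN.
    have h := expR_gt0 t; field.
    by rewrite (gt_eqF h) gt_eqF // addr_gt0.
  exact: l1.
have -> : (fun t : R => softmax K (ray K t) k) = (fun t => expR (- t) * (1 + (K%:R - 1) * expR (- t))^-1).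
  apply/funext => t; rewrite softmax_rayn // expRN.
  have h := expR_gt0 t; field.
  by rewrite (gt_eqF h) gt_eqF // addr_gt0.
exact: l2.
Qed.

Lemma lim_ninfty k : softmax K (ray K (- t)) k @[t --> +oo] -->
   (if k == k0 then 0 else (K%:R - 1)^-1 : R).
Proof.
have Kg1 := Kgt1; have cp : 0 < K%:R - 1 :> R by rewrite subr_gt0.
have [l1 l2 l3 l4] := @lim_aux (pinfty_nbhs R) _ (fun t => expR (- t)) (K%:R - 1) (@cvgr_expR R).
case: eqP => [->|/eqP kk].
  have -> : (fun t : R => softmax K (ray K (- t)) k0) = (fun t => expR (- t) * (expR (- t) + (K%:R - 1))^-1).
    by apply/funext => t; rewrite softmax_ray0.
  exact: l4.
have -> : (fun t : R => softmax K (ray K (- t)) k) = (fun t => (expR (- t) + (K%:R - 1))^-1).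
  by apply/funext => t; rewrite softmax_rayn.
exact: l3.
Qed.

Lemma smooth_cvg (F : set_system R) {FF : Filter F} (f : R -> R) (l a : R) :
  f t @[t --> F] --> l -> smooth K a (f t) @[t --> F] --> smooth K a l.
Proof.
move=> h; rewrite /smooth; exact: (cvgD (cvgMl_tmp (a:=1 - a) h) (@cvg_cst R (a / K%:R) _ F FF)).
Qed.

Definition kl : 'I_K := Ordinal (etrans (ltn_predL K) (ltn_trans (ltnSn 0) hK)).

Lemma softmax_inj (g g' : 'I_K -> R) : last0 K g -> last0 K g' ->
  softmax K g = softmax K g' -> g = g'.
Proof.
move=> hg hg' e.
have gl : g kl = 0 by apply: hg.
have gl' : g' kl = 0 by apply: hg'.
have eS : \sum_l expR (g l) = \sum_l expR (g' l).
  have := congr1 (fun f => f kl) e; rewrite /softmax gl gl' expR0 !mul1r.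
  exact: invr_inj.
apply/funext => k; have := congr1 (fun f => f k) e; rewrite /softmax eS => h.
apply: expR_inj; apply: (mulIf _ h).
by rewrite invr_eq0 gt_eqF // sumexp_gt0.
Qed.

Lemma smooth_ge0 (a v : R) : 0 <= a <= K%:R / (K%:R - 1) -> 0 <= v <= 1 -> 0 <= smooth K a v.
Proof.
move=> /andP[a0 aK] /andP[v0 v1].
have Kg1 := Kgt1; have Km : 0 < K%:R - 1 :> R by rewrite subr_gt0.
have Kg0 := Kgt0.
have aK' : a * (K%:R - 1) <= K%:R by rewrite -ler_pdivlMr.
have w := divfK Kn0 a; set w' := a / K%:R in w *.
have w0 : 0 <= w' by rewrite /w' divr_ge0 // ltW.
have s1 : 0 <= 1 - a + w' by nra.
have -> : smooth K a v = (1 - v) * w' + v * (1 - a + w') by rewrite /smooth -/w'; ring.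
by apply: addr_ge0; apply: mulr_ge0 => //; rewrite subr_ge0.
Qed.

Lemma sum_e1 : \sum_k e1 R K k = 1.
Proof.
rewrite (bigD1 k0) //= e1E eqxx big1 ?addr0 // => k kk.
by rewrite e1E (negPf kk).
Qed.

Lemma sinv_e1 (a : R) : 0 <= a <= K%:R / (K%:R - 1) -> sinv_simplex K a (e1 R K).
Proof.
move=> ha; split.
  move=> k; apply: smooth_ge0 => //; rewrite e1E; case: ifP => _; by rewrite ?lexx ?ler01.
by rewrite sum_smooth sum_e1 mulr1 subrK.
Qed.

Lemma sinv_softmax (a : R) g : 0 <= a <= K%:R / (K%:R - 1) -> sinv_simplex K a (softmax K g).
Proof.
move=> ha; split.
  move=> k; apply: smooth_ge0 => //.
  by rewrite (ltW (softmax_gt0 _ _)) (ltW (softmax_lt1 _ _)).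
by rewrite sum_smooth softmax_sum mulr1 subrK.
Qed.

Lemma range_ok (a : R) : (0 <= a < 1 \/ 1 < a <= K%:R / (K%:R - 1)) ->
  a != 1 /\ 0 <= a <= K%:R / (K%:R - 1).
Proof.
have Kg1 := Kgt1; have Km : 0 < K%:R - 1 :> R by rewrite subr_gt0.
have h1 : 1 <= K%:R / (K%:R - 1) :> R by rewrite ler_pdivlMr // mul1r; lra.
case=> /andP[h2 h3]; split.
- by rewrite lt_eqF.
- by rewrite h2 /=; lra.
- by rewrite gt_eqF.
- by rewrite h3 andbT; lra.
Qed.

Lemma B5 (a : R) : (0 <= a < 1 \/ 1 < a <= K%:R / (K%:R - 1)) ->
     argmin_pinfty K (fun g => DSKL K a (e1 R K) (softmax K g)).
Proof.
move=> /range_ok [a1 ar].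
exists 0%E; split.
  apply: (@kl_lim (pinfty_nbhs R) _ (fun k => smooth K a (e1 R K k))
            (fun k t => smooth K a (softmax K (ray K t) k))).
    by case: (sinv_e1 a ar).
  by move=> k; apply: smooth_cvg; exact: lim_pinfty.
move=> g _; have [h0 h1] := B3a a _ _ a1 (sinv_e1 a ar) (sinv_softmax a g ar).
rewrite lt_neqAle h0 andbT; apply/eqP => /esym /h1 e.
have := congr1 (fun f => f k1) e; rewrite e1E (negPf k10) => h.
by have := softmax_gt0 g k1; rewrite -h ltxx.
Qed.

Lemma B6a : argmin_pinfty K (fun g => DSKL K 0 (e1 R K) (qRL K 0 g)).
Proof.
have -> : (fun g => DSKL K 0 (e1 R K) (qRL K 0 g)) = (fun g => DSKL K 0 (e1 R K) (softmax K g)).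
  apply/funext => g; congr DSKL; apply/funext => k.
  by rewrite /qRL /smooth_inv mul0r subr0 subr0 divr1.
by apply: B5; left; rewrite lexx ltr01.
Qed.

Lemma B6b (a : R) : (0 < a < 1 \/ 1 < a < K%:R / (K%:R - 1)) ->
     argmin_at K (fun g => DSKL K a (e1 R K) (qRL K a g))
               (ray K (ln (K%:R / a + 1 - K%:R))).
Proof.
move=> ha.
have Kg1 := Kgt1; have Km : 0 < K%:R - 1 :> R by rewrite subr_gt0.
have Kg0 := Kgt0.
have hK1 : 1 <= K%:R / (K%:R - 1) :> R by rewrite ler_pdivlMr // mul1r; lra.
have [a0 aK] : 0 < a /\ a < K%:R / (K%:R - 1).
  by case: ha => /andP[h1 h2]; split; lra.
have a1 : a != 1 by case: ha => /andP[h1 h2]; apply/eqP => h; lra.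
have ar : 0 <= a <= K%:R / (K%:R - 1) by apply/andP; split; lra.
have aK' : a * (K%:R - 1) < K%:R by rewrite -ltr_pdivlMr.
set c := K%:R / a + 1 - K%:R.
have ec : c + (K%:R - 1) = K%:R / a by rewrite /c; ring.
have cp : 0 < c.
  have : 0 < K%:R / a - (K%:R - 1) by rewrite subr_gt0 ltr_pdivlMr // mulrC.
  by rewrite /c; lra.
have an0 : a != 0 by rewrite gt_eqF.
have Kn := Kn0.
have sg0 : softmax K (ray K (ln c)) = (fun k => smooth K a (e1 R K k)).
  apply/funext => k; rewrite e1E; case: eqP => [->|/eqP kk].
    rewrite softmax_ray0 lnK ?posrE // ec /smooth /c mulr1; field.
    by rewrite an0 Kn.
  by rewrite softmax_rayn // lnK ?posrE // ec /smooth mulr0 add0r invf_div.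
have fE : forall g, DSKL K a (e1 R K) (qRL K a g) =
    (\sum_k xlogxy (smooth K a (e1 R K k)) (softmax K g k))%E.
  by move=> g; rewrite /DSKL; apply: eq_bigr => k _; rewrite qRL_smooth.
have [e0 es] := sinv_e1 a ar.
split.
  move=> k hk; rewrite rayE; case: eqP => // ek; exfalso; move: hk; rewrite ek /=.
  by move: hK; case: (K) => [|[|n]].
move=> g hg; rewrite !fE.
have [h0 h1] := @gibbs R K _ _ e0 (fun k => ltW (softmax_gt0 g k))
   (etrans es (esym (softmax_sum g))).
have f0 : (\sum_k xlogxy (smooth K a (e1 R K k)) (softmax K (ray K (ln c)) k))%E = 0%E.
  by rewrite sg0 big1 // => k _; rewrite xlogxy_xx.
rewrite f0; split => // /h1 e; apply: softmax_inj => //.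
  move=> k hk; rewrite rayE; case: eqP => // ek; exfalso; move: hk; rewrite ek /=.
  by move: hK; case: (K) => [|[|n]].
by rewrite sg0 -e.
Qed.

Lemma B6c : argmin_ninfty K (fun g => DSKL K (K%:R / (K%:R - 1)) (e1 R K)
                                  (qRL K (K%:R / (K%:R - 1)) g)).
Proof.
set a := K%:R / (K%:R - 1).
have Kg1 := Kgt1; have Km : 0 < K%:R - 1 :> R by rewrite subr_gt0.
have Kg0 := Kgt0; have Kn := Kn0; have Kmn := Km1n0.
have ar : 0 <= a <= a by rewrite lexx andbT /a divr_ge0 // ltW.
have a1 : a != 1.
  apply/eqP => h; have : K%:R / (K%:R - 1) * (K%:R - 1) = 1 * (K%:R - 1) :> R.
    by rewrite -/a h.
  rewrite divfK // mul1r; lra.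
have [e0 es] := sinv_e1 a ar.
have fE : forall g, DSKL K a (e1 R K) (qRL K a g) =
    (\sum_k xlogxy (smooth K a (e1 R K k)) (softmax K g k))%E.
  by move=> g; rewrite /DSKL; apply: eq_bigr => k _; rewrite qRL_smooth.
have se : forall k, smooth K a (e1 R K k) = (if k == k0 then 0 else (K%:R - 1)^-1).
  move=> k; rewrite e1E /smooth /a; case: ifP => _; field; by rewrite ?Kn ?Kmn.
exists 0%E; split.
  apply/cvgNy_compNP; rewrite /comp.
  under eq_cvg do rewrite fE.
  apply: (@kl_lim (pinfty_nbhs R) _ (fun k => smooth K a (e1 R K k))
            (fun k t => softmax K (ray K (- t)) k)) => // k.
  by rewrite se; exact: lim_ninfty.
move=> g _; rewrite fE.
have [h0 h1] := @gibbs R K _ _ e0 (fun k => ltW (softmax_gt0 g k))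
   (etrans es (esym (softmax_sum g))).
rewrite lt_neqAle h0 andbT; apply/eqP => /esym /h1 e.
have := congr1 (fun f => f k0) e; rewrite se eqxx => h.
by have := softmax_gt0 g k0; rewrite -h ltxx.
Qed.

Section K2.
Hypothesis K2 : K = 2%N.

Lemma rev_neq (k : 'I_K) : rev_ord k != k.
Proof.
rewrite -(inj_eq val_inj) /=; move: (ltn_ord k); move: (nat_of_ord k) => x.
rewrite K2; lia.
Qed.

Lemma pair_sum (f : 'I_K -> R) k : \sum_j f j = f k + f (rev_ord k).
Proof.
rewrite (bigD1 k) //= (bigD1 (rev_ord k)) /=; last by rewrite rev_neq.
rewrite big1 ?addr0 // => j /andP[jk jr].
exfalso; move: jk jr; rewrite -!(inj_eq val_inj) /=.
move: (ltn_ord j) (ltn_ord k); move: (nat_of_ord j) (nat_of_ord k) => x y.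
rewrite K2; lia.
Qed.

Lemma one_minus (a : R) p k : a != 1 -> sinv_simplex K a p -> 1 - p k = p (rev_ord k).
Proof.
move=> a1 hp; have := sinv_sum a p a1 hp; rewrite (pair_sum _ k) => <-.
by ring.
Qed.

Lemma softmax_neg (g : 'I_K -> R) k : softmax K (fun j => - g j) k = softmax K g (rev_ord k).
Proof.
rewrite /softmax (pair_sum _ k) (pair_sum (fun l => expR (g l)) k) !expRN.
have h1 := expR_gt0 (g k); have h2 := expR_gt0 (g (rev_ord k)).
field; rewrite ?gt_eqF ?addr_gt0 ?invr_gt0 // ?mulf_neq0 ?gt_eqF //.
Qed.

Lemma softmax_compl (g : 'I_K -> R) k : 1 - softmax K g k = softmax K g (rev_ord k).
Proof. by have := softmax_sum g; rewrite (pair_sum _ k) => <-; ring. Qed.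

Lemma id2 (a v : R) : smooth K (2 - a) (1 - v) = smooth K a v.
Proof. by rewrite /smooth K2; field. Qed.

Lemma B8 (a : R) (p g : 'I_K -> R) :
     1 < a <= 2 -> sinv_simplex K a p ->
     let p' := fun k => 1 - p k in
     let mg := fun k => - g k in
     DSKL K a p (softmax K g) = DSKL K (2 - a) p' (softmax K mg) /\
     DSKL K (2 - a) p' (softmax K mg) = DSKL K (2 - a) p (softmax K g) /\
     DSKL K a p (qRL K a g) = DSKL K (2 - a) p' (qRL K (2 - a) g) /\
     DSKL K (2 - a) p' (qRL K (2 - a) g) = DSKL K (2 - a) p (qRL K (2 - a) mg) /\
     0 <= 2 - a < 1 /\
     sinv_simplex K (2 - a) p'.
Proof.
move=> /andP[a1 a2] hp p' mg.
have an1 : a != 1 by rewrite gt_eqF.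
have bn1 : 2 - a != 1 by apply/negP => /eqP h; move: a1; rewrite ltNge; apply/negP/negPn; apply/eqP; lra.
have om : forall k, p' k = p (rev_ord k) by move=> k; rewrite /p' (one_minus _ _ _ an1 hp).
have smg : forall k, softmax K mg k = 1 - softmax K g k.
  by move=> k; rewrite softmax_neg softmax_compl.
split.
  by rewrite /DSKL; apply: eq_bigr => k _; rewrite /p' smg !id2.
split.
  rewrite /DSKL [RHS](reindex_inj rev_ord_inj) /=; apply: eq_bigr => k _.
  by rewrite om softmax_neg.
split.
  by rewrite /DSKL; apply: eq_bigr => k _; rewrite !qRL_smooth // /p' id2.
split.
  rewrite /DSKL [RHS](reindex_inj rev_ord_inj) /=; apply: eq_bigr => k _.
  by rewrite !qRL_smooth // om softmax_neg rev_ordK.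
split; first by apply/andP; split; lra.
rewrite /sinv_simplex.
have -> : (fun k => smooth K (2 - a) (p' k)) = (fun k => smooth K a (p k)).
  by apply/funext => k; rewrite /p' id2.
exact: hp.
Qed.

End K2.

End H3.

Theorem theorem1 (R : realType) (K : nat) (hK : (2 <= K)%N) :
  (* (B1) *)
  (forall a : R,
     let lo := - a / (K%:R * (1 - a)) in
     let hi := (K%:R - a) / (K%:R * (1 - a)) in
     (0 <= a < 1 ->
        (forall (g : 'I_K -> R) (k : 'I_K), lo <= qRL K a g k <= hi) /\
        (forall (k : 'I_K) (y : R), lo < y < hi -> exists g, qRL K a g k = y) /\
        lo <= 0 /\ 1 <= hi) /\
     (1 < a <= K%:R / (K%:R - 1) ->
        (forall (g : 'I_K -> R) (k : 'I_K), hi <= qRL K a g k <= lo) /\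
        (forall (k : 'I_K) (y : R), hi < y < lo -> exists g, qRL K a g k = y) /\
        hi <= 0 /\ 1 <= lo)) /\
  (* (B2) *)
  (forall (a : R) (g : 'I_K -> R), a != 1 -> \sum_(k < K) qRL K a g k = 1) /\
  (* (B3) *)
  (forall (a : R) (p q : 'I_K -> R),
     (0 <= a < 1 \/ 1 < a <= K%:R / (K%:R - 1)) ->
     sinv_simplex K a p -> sinv_simplex K a q ->
     (0 <= DSKL K a p q)%E /\ (DSKL K a p q = 0%E <-> p = q)) /\
  (forall (p q : 'I_K -> R),
     sinv_simplex K 1 p -> sinv_simplex K 1 q -> DSKL K 1 p q = 0%E) /\
  (* (B4) *)
  (forall (a r : R) (p1 p2 q1 q2 : 'I_K -> R),
     0 <= a <= K%:R / (K%:R - 1) -> 0 <= r <= 1 ->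
     sinv_simplex K a p1 -> sinv_simplex K a p2 ->
     sinv_simplex K a q1 -> sinv_simplex K a q2 ->
     (DSKL K a (fun k => (r * p1 k + (1 - r) * p2 k)%R)
               (fun k => (r * q1 k + (1 - r) * q2 k)%R)
      <= r%:E * DSKL K a p1 q1 + (1 - r)%R%:E * DSKL K a p2 q2)%E) /\
  (* (B5) *)
  (forall a : R,
     (0 <= a < 1 \/ 1 < a <= K%:R / (K%:R - 1)) ->
     argmin_pinfty K (fun g => DSKL K a (e1 R K) (softmax K g))) /\
  (* (B6) *)
  (argmin_pinfty K (fun g => DSKL K 0 (e1 R K) (qRL K 0 g))) /\
  (forall a : R,
     (0 < a < 1 \/ 1 < a < K%:R / (K%:R - 1)) ->
     argmin_at K (fun g => DSKL K a (e1 R K) (qRL K a g))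
               (ray K (ln (K%:R / a + 1 - K%:R)))) /\
  (argmin_ninfty K (fun g => DSKL K (K%:R / (K%:R - 1)) (e1 R K)
                                  (qRL K (K%:R / (K%:R - 1)) g))) /\
  (* (B7) *)
  (forall (a : R) (p q g : 'I_K -> R),
     1 < a <= K%:R / (K%:R - 1) ->
     sinv_simplex K a p -> sinv_simplex K a q ->
     let b := K%:R - (K%:R - 1) * a in
     let p' := fun k => (1 - p k) / (K%:R - 1) in
     let q' := fun k => (1 - q k) / (K%:R - 1) in
     DSKL K a p q = DSKL K b p' q' /\
     DSKL K a p (qRL K a g) = DSKL K b p' (qRL K b g) /\
     0 <= b < 1 /\
     sinv_simplex K b p') /\
  (* (B8) *)
  (K = 2%N ->
   forall (a : R) (p g : 'I_K -> R),
     1 < a <= 2 -> sinv_simplex K a p ->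
     let p' := fun k => 1 - p k in
     let mg := fun k => - g k in
     DSKL K a p (softmax K g) = DSKL K (2 - a) p' (softmax K mg) /\
     DSKL K (2 - a) p' (softmax K mg) = DSKL K (2 - a) p (softmax K g) /\
     DSKL K a p (qRL K a g) = DSKL K (2 - a) p' (qRL K (2 - a) g) /\
     DSKL K (2 - a) p' (qRL K (2 - a) g) = DSKL K (2 - a) p (qRL K (2 - a) mg) /\
     0 <= 2 - a < 1 /\
     sinv_simplex K (2 - a) p').
Proof.
split; first by move=> a; exact: (@B1 R K hK a).
split; first by move=> a g a1; exact: (@B2 R K hK a g a1).
split.
  move=> a p q ha hp hq; have [a1 _] := @range_ok R K hK a ha.
  exact: (@B3a R K a p q a1 hp hq).
split; first by move=> p q _ _; exact: (@B3b R K p q).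
split; first by move=> a r p1 p2 q1 q2; exact: (@B4 R K a r p1 p2 q1 q2).
split; first by move=> a ha; exact: (@B5 R K hK a ha).
split; first exact: (@B6a R K hK).
split; first by move=> a ha; exact: (@B6b R K hK a ha).
split; first exact: (@B6c R K hK).
split; first by move=> a p q g ha hp hq; exact: (@B7 R K hK a p q g ha hp hq).
by move=> K2 a p g ha hp; exact: (@B8 R K hK K2 a p g ha hp).
Qed.
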